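(* Let $w_g$ be the number of weakly admissible compositions of $g$ whose maximal part is at least $6$. Then $\limsup_{g\to\infty}w_g^{1/g}<\omega=\frac{1+\sqrt5}2$. In particular, the number of NSG-compositions of genus $g$ with maximum at least $6$ has growth-rate strictly smaller than $\omega$.
   Context: A composition $x_1+\cdots+x_{m-1}$ with last maximal part $x_l$ (i.e. $x_1,\dots,x_{l-1}\le x_l$ and $x_{l+1},\dots,x_{m-1}<x_l$) is weakly admissible if $x_l\le x_i+x_{l-i}$ for $1\le i\le l-1$ and $x_l\le 1+x_{l+i}+x_{m-i}$ for $1\le i\le m-1-l$. An NSG-composition is a composition $x_1+\cdots+x_{m-1}$ satisfying $x_{s+t}\le x_s+x_t$ and $x_{m-s-t}\le x_{m-s}+x_{m-t}+1$ for all $s,t\ge1$, $s+t<m$ (equivalently, the Kunz vector $x_j=\#((\mathbb N\setminus S)\cap(j+m\mathbb Z))$ of a numerical semigroup $S$ of multiplicity $m$); its genus is $\sum x_j$. The growth-rate of a family of compositions is $\limsup_{g\to\infty}a_g^{1/g}$ where $a_g$ is the number of members of genus (sum) $g$. *)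

(* Defs.v *)
From mathcomp Require Import all_boot all_order all_algebra.
From mathcomp Require Import all_classical all_reals all_analysis.
Set Implicit Arguments. Unset Strict Implicit. Unset Printing Implicit Defensive.

(* A composition x_1 + ... + x_{m-1} is a list s = [:: x_1; ...; x_{m-1}]
   of positive naturals; m = size s + 1. Parts are indexed from 1. *)
Definition part (s : seq nat) (j : nat) : nat := nth 0 s j.-1.

Fixpoint comps_fuel (f n : nat) : seq (seq nat) :=
  if n is 0 then [:: [::]] else
  match f with
  | 0 => [::]
  | f'.+1 => flatten [seq [seq k :: t | t <- comps_fuel f' (n - k)] | k <- iota 1 n]
  end.
Definition compositions (n : nat) : seq (seq nat) := comps_fuel n n.

Definition maxpart (s : seq nat) : nat := \max_(i <- s) i.

Definition lastmax (s : seq nat) : nat :=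
  \max_(1 <= j < (size s).+1 | part s j == maxpart s) j.

Definition weakly_admissible (s : seq nat) : Prop :=
  let m := (size s).+1 in
  let l := lastmax s in
  (forall i, 1 <= i <= l - 1 -> part s l <= part s i + part s (l - i)) /\
  (forall i, 1 <= i <= m - 1 - l ->
      part s l <= 1 + part s (l + i) + part s (m - i)).

Definition nsg_composition (s : seq nat) : Prop :=
  let m := (size s).+1 in
  forall a b, 1 <= a -> 1 <= b -> a + b < m ->
    part s (a + b) <= part s a + part s b /\
    part s (m - a - b) <= part s (m - a) + part s (m - b) + 1.

Definition w_count (g : nat) : nat :=
  count (fun s => asbool (weakly_admissible s) && (6 <= maxpart s)) (compositions g).

Definition nsg_count (g : nat) : nat :=
  count (fun s => asbool (nsg_composition s) && (6 <= maxpart s)) (compositions g).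

Local Open Scope ring_scope.
Definition growth_rate (R : realType) (a : nat -> nat) : \bar R :=
  limn_esup (fun g : nat => (((a g)%:R : R) `^ (g%:R^-1))%:E).

Definition golden (R : realType) : R := (1 + Num.sqrt 5) / 2.

(* Main.v *)
Require Import Defs.
From mathcomp Require Import all_boot all_order all_algebra.
From mathcomp Require Import all_classical all_reals all_analysis.
From mathcomp Require Import zify.
Set Implicit Arguments. Unset Strict Implicit. Unset Printing Implicit Defensive.
From mathcomp Require Import ring lra.
Lemma comps_fuel_mem f n s : s \in comps_fuel f n -> all (fun x => 0 < x) s /\ sumn s = n.
Proof.
elim: f n s => [|f IH] [|n] s.
- by rewrite inE => /eqP->.
- by [].
- by rewrite inE => /eqP->.
move/flatten_mapP=> [k]; rewrite mem_iota => /andP[k1 kn] /mapP[t /IH [ht st] ->] /=.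
split; first by rewrite ht andbT.
rewrite st; lia.
Qed.

Lemma comps_fuel_uniq f n : uniq (comps_fuel f n).
Proof.
elim: f n => [|f IH] [|n] //.
apply: allpairs_uniq_dep => //; first exact: iota_uniq.
by move=> [a t] [b u] _ _ /= [-> ->].
Qed.

Definition valid (T : nat) (s : seq nat) : bool :=
  all (fun x => 0 < x <= T) s && all (fun p : nat * nat => T <= p.1 + p.2) (zip s (rev s)).

Definition allpairs_T (T : nat) : seq (nat * nat) :=
  [seq p <- [seq (a, b) | a <- iota 1 T, b <- iota 1 T] | T <= p.1 + p.2].

Definition prs (T n : nat) : seq (nat * nat) :=
  [seq p <- allpairs_T T | p.1 + p.2 <= n].

Fixpoint pal (T f n : nat) : seq (seq nat) :=
  [:: [::]; [:: n]] ++
  (if f is f'.+1 then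
     flatten [seq [seq p.1 :: rcons t p.2 | t <- pal T f' (n - (p.1 + p.2))] | p <- prs T n]
   else [::]).

Lemma valid_strip T a b t : valid T (a :: rcons t b) = [&& 0 < a <= T, 0 < b <= T, T <= a + b & valid T t].
Proof.
rewrite /valid rev_cons rev_rcons rcons_cons /= zip_rcons ?size_rev // all_rcons /= all_rcons /=.
rewrite (addnC b a).
by case: (0 < a <= T); case: (0 < b <= T); case: (T <= a + b); case: (all _ t); case: (all _ (zip _ _)).
Qed.

Lemma pal_mem T f s : size s <= f.+1 -> valid T s -> s \in pal T f (sumn s).
Proof.
elim: f s => [|f IH] s.
- case: s => [|a [|b s]] //= _ _; by rewrite !inE ?addn0 eqxx ?orbT.
case: s => [|a s1]; first by rewrite inE eqxx.
case/lastP: s1 => [|t b]; first by move=> _ _; rewrite /= !inE addn0 eqxx orbT.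
rewrite valid_strip => Hs /and4P[Ha Hb Hab Ht]; move: Hs; rewrite /= size_rcons => Hs.
rewrite !inE; apply/orP; right; apply/orP; right.
apply/flatten_mapP; exists (a, b).
  rewrite /prs mem_filter /= sumn_rcons; apply/andP; split; first lia.
  rewrite /allpairs_T mem_filter /= Hab; apply/allpairsP; exists (a, b) => /=.
  by rewrite !mem_iota; split => //; lia.
apply/mapP; exists t => //=.
rewrite /= sumn_rcons.
have -> : a + (sumn t + b) - (a + b) = sumn t by lia.
by apply: IH => //; lia.
Qed.
Section RealPart.
Local Open Scope ring_scope.
Import Order.TTheory GRing.Theory Num.Theory.
Variable R : realType.

Lemma exprV_sub (z : R) k n : z != 0 -> (k <= n)%N -> z^-1 ^+ (n - k) = z^-1 ^+ n * z ^+ k.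
Proof.
move=> z0 kn; rewrite !exprVn.
have -> : z ^+ n = z ^+ (n - k) * z ^+ k by rewrite -exprD subnK.
have h1 : z ^+ (n - k) != 0 by exact: expf_neq0.
have h2 : z ^+ k != 0 by exact: expf_neq0.
by field; rewrite h1 h2.
Qed.

Lemma pal_size (z e : R) T : 0 < z < 1 -> 0 < e ->
  \sum_(p <- allpairs_T T) z ^+ (p.1 + p.2) <= 1 - e ->
  forall f n, (size (pal T f n))%:R <= 2 / e * z^-1 ^+ n.
Proof.
move=> /andP[z0 z1] e0 Hsum.
have c1 : 1 <= z^-1 by rewrite invf_ge1 // ltW.
have cn n : 1 <= z^-1 ^+ n by exact: exprn_ege1.
have e1 : e <= 1.
  have : 0 <= \sum_(p <- allpairs_T T) z ^+ (p.1 + p.2) by apply: sumr_ge0 => p _; rewrite exprn_ge0 // ltW.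
  move: Hsum; lra.
have base n : 2 <= 2 / e * z^-1 ^+ n.
  have h : 2 <= 2 / e by rewrite ler_pdivlMr //; lra.
  apply: le_trans h _; apply: ler_peMr; [by rewrite divr_ge0 // ltW | exact: cn].
elim=> [|f IH] n; first by rewrite /= base.
rewrite /= size_flatten /shape -map_comp sumnE big_map -addn2 natrD natr_sum.
set c := z^-1.
have step : \sum_(p <- prs T n) ((size \o (fun p => [seq p.1 :: rcons t p.2 | t <- pal T f (n - (p.1 + p.2))])) p)%:R
   <= 2 / e * c ^+ n * \sum_(p <- prs T n) z ^+ (p.1 + p.2).
  rewrite mulr_sumr !big_seq; apply: ler_sum => p pin /=.
  rewrite size_map.
  have hp : (p.1 + p.2 <= n)%N by move: pin; rewrite mem_filter => /andP[].
  apply: (le_trans (IH _)).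
  by rewrite /c exprV_sub ?gt_eqF // mulrA.
have hprs : \sum_(p <- prs T n) z ^+ (p.1 + p.2) <= 1 - e.
  apply: le_trans Hsum.
  rewrite /prs big_filter [X in _ <= X](bigID (fun p : nat * nat => (p.1 + p.2 <= n)%N)) /= lerDl.
  by apply: sumr_ge0 => p _; rewrite exprn_ge0 // ltW.
have hcn : 0 <= 2 / e * c ^+ n by rewrite mulr_ge0 // ?divr_ge0 // ?exprn_ge0 // ?invr_ge0 ltW.
apply: (le_trans (lerD step (lexx 2))).
have := ler_wpM2l hcn hprs.
have := cn n; rewrite -/c.
move=> h1 h2.
have h3 : 2 / e * c ^+ n * (1 - e) = 2 / e * c ^+ n - 2 * c ^+ n.
  by field; rewrite gt_eqF.
rewrite h3 in h2; lra.
Qed.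
End RealPart.
Section KeyPart.
Local Open Scope ring_scope.
Import Order.TTheory GRing.Theory Num.Theory.
Variable R : realType.

Lemma geo_cond (z : R) : 0 <= z < 1 -> forall n m k,
  \sum_(b <- iota m n) (if (k <= b)%N then z ^+ b else 0) <= z ^+ (maxn m k) / (1 - z).
Proof.
move=> /andP[z0 z1]; elim=> [|n IH] m k.
  rewrite big_nil; apply: divr_ge0; [exact: exprn_ge0 | lra].
rewrite [iota _ _]/= big_cons; have := IH m.+1 k.
case: (leqP k m) => km.
- have -> : maxn m.+1 k = m.+1 by apply/maxn_idPl; lia.
  move=> h; apply: le_trans (lerD (lexx _) h) _.
  have -> : z ^+ m / (1 - z) = z ^+ m + z ^+ m.+1 / (1 - z).
    by rewrite exprS; field; apply/eqP => /eqP; rewrite subr_eq0 => /eqP h1; move: z1; rewrite -h1 ltxx.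
  by [].
- have -> : maxn m.+1 k = k by apply/maxn_idPr.
  by rewrite add0r.
Qed.

Lemma crude (z : R) T : 0 < z < 1 ->
  \sum_(p <- allpairs_T T) z ^+ (p.1 + p.2) <= T%:R * (z ^+ T / (1 - z)).
Proof.
move=> /andP[z0 z1].
rewrite /allpairs_T big_filter big_mkcond big_allpairs /=.
have -> : iota 1 T = index_iota 1 T.+1 by rewrite /index_iota subSS subn0.
set C := z ^+ T / (1 - z).
have -> : T%:R * C = \sum_(1 <= i < T.+1) C by rewrite sumr_const_nat subn1 mulr_natl.
rewrite big_seq [X in _ <= X]big_seq.
apply: ler_sum => a; rewrite mem_iota => /andP[a1 aT].
have aT' : (a <= T)%N by lia.
apply: le_trans (_ : \sum_(b <- index_iota 1 T.+1) z ^+ a * (if (T - a <= b)%N then z ^+ b else 0) <= _).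
  apply: ler_sum => b _.
  case: (leqP (T - a) b) => h1.
    by rewrite ifT ?exprD //; lia.
  by rewrite ifF ?mulr0 //; apply/negbTE; lia.
rewrite -mulr_sumr /index_iota subSS subn0.
apply: le_trans (ler_wpM2l (exprn_ge0 _ (ltW z0)) (geo_cond _ T 1 (T - a))) _.
  by rewrite ltW.
rewrite mulrA -exprD; apply: ler_wpM2r.
  by rewrite invr_ge0; lra.
apply: ler_wiXn2l; [exact: ltW| exact: ltW| lia].
Qed.

Lemma TzT_mono (z : R) T : 0 <= z -> z <= 6 / 7 -> (6 <= T)%N ->
  T%:R * z ^+ T <= 6 * z ^+ 6.
Proof.
move=> z0 z67; elim: T => // T IH; rewrite leq_eqVlt => /orP[/eqP <- //|].
rewrite ltnS => T6; have h := IH T6.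
apply: le_trans h; rewrite exprS mulrA -natr1.
apply: ler_wpM2r; first exact: exprn_ge0.
have : 6 <= T%:R :> R by rewrite (ler_nat R 6 T).
nra.
Qed.
End KeyPart.
Section KeyInst.
Local Open Scope ring_scope.
Import Order.TTheory GRing.Theory Num.Theory.
Variable R : realType.

Lemma crude6 (z : R) T : 0 < z -> z <= 6/7 -> (6 <= T)%N ->
  \sum_(p <- allpairs_T T) z ^+ (p.1 + p.2) <= 6 * z ^+ 6 / (1 - z).
Proof.
move=> z0 z67 T6.
have z1 : z < 1 by lra.
apply: le_trans (crude T _) _; first by rewrite z0 z1.
rewrite mulrA; apply: ler_wpM2r; first by rewrite invr_ge0; lra.
exact: TzT_mono (ltW z0) z67 T6.
Qed.

Lemma keyP T : (6 <= T)%N -> \sum_(p <- allpairs_T T) (5/8 : R) ^+ (p.1 + p.2) <= 1 - 1/25.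
Proof.
move=> T6; apply: le_trans (crude6 _ _ T6) _; try lra.
rewrite ler_pdivrMr; last lra.
rewrite !exprS expr0; lra.
Qed.

Lemma keyQ T : (5 <= T)%N -> \sum_(p <- allpairs_T T) (13/21 : R) ^+ (p.1 + p.2) <= 1 - 1/20.
Proof.
rewrite leq_eqVlt => /orP[/eqP <-|T6].
  rewrite /allpairs_T /= !big_cons big_nil /= !exprS expr0; lra.
apply: le_trans (crude6 _ _ T6) _; try lra.
rewrite ler_pdivrMr; last lra.
rewrite !exprS expr0; lra.
Qed.
End KeyInst.
Lemma lastmax_gen (P : pred nat) n :
  let l := \max_(1 <= j < n.+1 | P j) j in
  [/\ (l <= n)%N, (forall j, (1 <= j <= n)%N -> P j -> (j <= l)%N) & (l = 0 \/ (1 <= l)%N /\ P l)].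
Proof.
elim: n => [|n IH] /=.
  rewrite big_geq //; split => //; [by move=> j; lia | by left].
case: IH => IH1 IH2 IH3.
rewrite big_mkcond big_nat_recr //= -big_mkcond.
set l := \max_(1 <= j < n.+1 | P j) j in IH1 IH2 IH3 *.
case Pn: (P n.+1).
- have -> : maxn l n.+1 = n.+1 by apply/maxn_idPr; lia.
  split => //; [by move=> j; lia | by right].
- rewrite maxn0; split; [lia| |by []].
  move=> j /andP[j1 jn] Pj; have jn' : (j <= n)%N.
    by case: (ltngtP j n.+1) jn => // ejn _; rewrite ejn Pn in Pj.
  by apply: IH2 => //; rewrite j1.
Qed.

Lemma maxpart_ge (s : seq nat) x : x \in s -> (x <= maxpart s)%N.
Proof.
rewrite /maxpart; elim: s => // a s IH; rewrite inE big_cons => /orP[/eqP->|/IH h].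
  exact: leq_maxl.
by apply: leq_trans h (leq_maxr _ _).
Qed.

Lemma maxpart_mem (s : seq nat) : s != [::] -> maxpart s \in s.
Proof.
rewrite /maxpart; elim: s => // a s IH _; rewrite big_cons inE.
case: s IH => [|b s] IH; first by rewrite big_nil maxn0 eqxx.
have := IH isT; set m := \big[maxn/0]_(i <- b :: s) i => hm.
case: (leqP m a) => h; first by rewrite eqxx.
by rewrite hm orbT.
Qed.

Lemma all_zip_rev T (s : seq nat) :
  (forall i, (i < size s)%N -> (T <= nth 0 s i + nth 0 s (size s - i.+1))%N) ->
  all (fun p : nat * nat => T <= p.1 + p.2) (zip s (rev s)).
Proof.
move=> H; apply/(all_nthP (0, 0)) => i; rewrite size_zip size_rev minnn => hi.
by rewrite nth_zip ?size_rev // nth_rev //=; exact: H.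
Qed.

Lemma size_le_sumn (s : seq nat) : all (fun x => 0 < x) s -> (size s <= sumn s)%N.
Proof. by elim: s => //= a s IH /andP[a0 /IH h]; lia. Qed.

Lemma lastmax_facts (s : seq nat) : s != [::] ->
  let l := lastmax s in
  [/\ (1 <= l <= size s)%N, part s l = maxpart s &
      forall j, (l < j <= size s)%N -> part s j != maxpart s].
Proof.
move=> sn /=.
have [H1 H2 H3] := lastmax_gen (fun j => part s j == maxpart s) (size s).
rewrite -/(lastmax s) in H1 H2 H3.
have ex : exists j, (1 <= j <= size s)%N /\ part s j == maxpart s.
  have mm := maxpart_mem sn.
  exists (index (maxpart s) s).+1; split; first by rewrite /= index_mem mm.
  by rewrite /part /= nth_index.
case: ex => j [jr jP]; have jl := H2 j jr jP.
case: H3 => [l0|[l1 lP]]; first by lia.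
split; [by rewrite l1 H1| exact/eqP|].
move=> k /andP[lk ks]; apply/negP => kP.
have := H2 k; rewrite ks (leq_trans _ lk) // => /(_ isT kP); lia.
Qed.

Lemma wa_decomp (s : seq nat) : all (fun x => 0 < x) s -> weakly_admissible s -> (6 <= maxpart s)%N ->
  let M := maxpart s in let l := lastmax s in
  [/\ s = take l.-1 s ++ M :: drop l s, valid M (take l.-1 s) & valid M.-1 (drop l s)].
Proof.
move=> spos [W1 W2] M6 M l.
have sn : s != [::] by apply/eqP => s0; move: M6; rewrite s0 /maxpart big_nil.
have [/andP[l1 ls] lM lafter] := lastmax_facts sn.
have memM x : x \in s -> (0 < x <= M)%N.
  by move=> xs; rewrite (allP spos) //= maxpart_ge.
rewrite -/l -/M in l1 ls lM lafter W1 W2 M6.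
clearbody M l.
split.
- rewrite -{1}(cat_take_drop l.-1 s) (drop_nth 0); last lia.
  have -> : l.-1.+1 = l by lia.
  by congr (_ ++ _ :: _); rewrite -lM /part.
- apply/andP; split.
    by apply/allP => x /mem_take /memM.
  apply: all_zip_rev => i; rewrite size_takel; last lia.
  move=> hi; rewrite !nth_take; try lia.
  have := W1 i.+1; rewrite lM /part /=.
  have -> : (l - i.+1).-1 = l.-1 - i.+1 by lia.
  by apply; lia.
- apply/andP; split.
    apply/(all_nthP 0) => i; rewrite size_drop => hi; rewrite nth_drop.
    have h1 := memM (nth 0 s (l + i)) (mem_nth 0 (_ : (l + i < size s)%N)).
    have h2 := lafter (l + i).+1; rewrite /part /= in h2.
    have : nth 0 s (l + i) != M by apply: h2; lia.
    move: (h1 ltac:(lia)); lia.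
  apply: all_zip_rev => i; rewrite size_drop => hi; rewrite !nth_drop.
  have := W2 i.+1; rewrite lM /part /=.
  have -> : (l + i.+1).-1 = l + i by lia.
  have -> : ((size s).+1 - i.+1).-1 = l + (size s - l - i.+1) by lia.
  move=> h; have := h ltac:(lia); lia.
Qed.
Definition Wlist (g : nat) : seq (seq nat) :=
  flatten [seq flatten [seq [seq P ++ M :: Q | P <- pal M g n1, Q <- pal M.-1 g (g - M - n1)]
                       | n1 <- iota 0 (g - M).+1]
          | M <- iota 6 (g - 5)].

Lemma Wlist_mem (s : seq nat) : all (fun x => 0 < x) s -> weakly_admissible s -> (6 <= maxpart s)%N ->
  s \in Wlist (sumn s).
Proof.
move=> spos wa M6.
have [sdec vP vQ] := wa_decomp spos wa M6.
set M := maxpart s in sdec vP vQ M6; set l := lastmax s in sdec vP vQ.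
set P := take l.-1 s in sdec vP; set Q := drop l s in sdec vQ.
have hsz := size_le_sumn spos.
have eg : sumn s = sumn P + M + sumn Q by rewrite {1}sdec sumn_cat /=; lia.
have szs : size s = size P + (size Q).+1 by rewrite {1}sdec size_cat.
apply/flatten_mapP; exists M; first by rewrite mem_iota; lia.
apply/flatten_mapP; exists (sumn P); first by rewrite mem_iota; lia.
rewrite {1}sdec; apply/allpairsP; exists (P, Q) => /=; split => //.
  by apply: pal_mem => //; lia.
have -> : sumn s - M - sumn P = sumn Q by lia.
by apply: pal_mem => //; lia.
Qed.

Lemma count_le_size (p : pred (seq nat)) g L :
  (forall s, s \in compositions g -> p s -> s \in L) -> (count p (compositions g) <= size L)%N.
Proof.
move=> H; rewrite -size_filter; apply: uniq_leq_size.
  by apply: filter_uniq; exact: comps_fuel_uniq.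
by move=> s; rewrite mem_filter => /andP[ps sc]; exact: H.
Qed.

Lemma w_count_le g : (w_count g <= size (Wlist g))%N.
Proof.
apply: count_le_size => s sc /andP[/asboolP wa M6].
have [spos sg] := comps_fuel_mem sc.
by rewrite -sg; apply: Wlist_mem.
Qed.

Lemma nsg_wa (s : seq nat) : (6 <= maxpart s)%N -> nsg_composition s -> weakly_admissible s.
Proof.
move=> M6 N.
have sn : s != [::] by apply/eqP => s0; move: M6; rewrite s0 /maxpart big_nil.
have [/andP[l1 ls] _ _] := lastmax_facts sn.
rewrite /weakly_admissible /=.
move: (lastmax s) l1 ls => l l1 ls.
split.
- move=> i /andP[i1 il].
  have [|||h _] := N i (l - i); try lia.
  by have {1}-> : l = i + (l - i) by lia.
- move=> i /andP[i1 il].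
  have [|||_ h] := N ((size s).+1 - l - i) i; try lia.
  move: h.
  have -> : (size s).+1 - ((size s).+1 - l - i) - i = l by lia.
  have -> : (size s).+1 - ((size s).+1 - l - i) = l + i by lia.
  lia.
Qed.

Lemma nsg_le_w g : (nsg_count g <= w_count g)%N.
Proof.
apply: sub_count => s /andP[/asboolP ns M6].
by apply/andP; split => //; apply/asboolP; apply: nsg_wa.
Qed.

Lemma size_flatten_map (A B : Type) (F : A -> seq B) (s : seq A) :
  size (flatten (map F s)) = \sum_(x <- s) size (F x).
Proof. by elim: s => [|a s IH]; rewrite ?big_nil ?big_cons //= size_cat IH. Qed.

Lemma size_Wlist g : size (Wlist g) =
  \sum_(M <- iota 6 (g - 5)) \sum_(n1 <- iota 0 (g - M).+1)
     size (pal M g n1) * size (pal M.-1 g (g - M - n1)).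
Proof.
rewrite /Wlist size_flatten_map; apply: eq_bigr => M _.
rewrite size_flatten_map; apply: eq_bigr => n1 _.
by rewrite size_allpairs.
Qed.
Section Final.
Local Open Scope ring_scope.
Import Order.TTheory GRing.Theory Num.Theory.
Variable R : realType.

Definition z1 : R := 5/8.
Definition z2 : R := 13/21.
Definition A12 : R := 2 / (1/25) * (2 / (1/20)).
Definition Kc : R := A12 / (1 - z2) / (1 - z1^-1 * z2).

Lemma geo_le (q : R) a k : 0 <= q < 1 -> \sum_(i <- iota a k) q ^+ i <= 1 / (1 - q).
Proof.
move=> /andP[q0 q1].
have := geo_cond (_ : 0 <= q < 1) k a 0; rewrite q0 q1 => /(_ isT).
move=> h; rewrite (eq_bigr (fun i => q ^+ i)) in h; last by move=> i _.
apply: le_trans h _; rewrite maxn0 ler_pM2r; last by rewrite invr_gt0; lra.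
exact: exprn_ile1 q0 (ltW q1).
Qed.

Lemma z1inv : z1^-1 = 8/5. Proof. by rewrite /z1 invf_div. Qed.

Lemma term_bound g M n1 : M \in iota 6 (g - 5) -> n1 \in iota 0 (g - M).+1 ->
  (size (pal M g n1))%:R * (size (pal M.-1 g (g - M - n1)))%:R
   <= A12 * (z2^-1 ^+ g) * (z2 ^+ M * (z1^-1 * z2) ^+ n1).
Proof.
rewrite !mem_iota => /andP[M6 Mg] /andP[_ n1g].
have hP := @pal_size R z1 (1/25) M ltac:(rewrite /z1; lra) ltac:(lra) (keyP R M6) g n1.
have M5 : (5 <= M.-1)%N by lia.
have hQ := @pal_size R z2 (1/20) M.-1 ltac:(rewrite /z2; lra) ltac:(lra) (keyQ R M5) g (g - M - n1).
apply: le_trans (ler_pM (ler0n _ _) (ler0n _ _) hP hQ) _.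
have -> : (g - M - n1 = g - (M + n1))%N by rewrite subnDA.
rewrite exprV_sub; last by lia.
  2: by rewrite /z2; apply/eqP => h; have : (13/21 : R) = 0 by []; lra.
have e : (z1^-1 * z2) ^+ n1 = z1^-1 ^+ n1 * z2 ^+ n1 := exprMn _ _ _.
rewrite /A12 e exprD.
have z10 : z1 != 0 by rewrite /z1; apply/eqP; lra.
rewrite le_eqVlt; apply/orP; left; apply/eqP.
ring.
Qed.

Lemma w_bound g : (w_count g)%:R <= Kc * z2^-1 ^+ g.
Proof.
have h1 : (w_count g)%:R <= (size (Wlist g))%:R :> R by rewrite ler_nat w_count_le.
apply: le_trans h1 _.
set q := z1^-1 * z2.
have q0 : 0 <= q < 1 by rewrite /q z1inv /z2; apply/andP; split; lra.
have zz : 0 <= z2 < 1 by rewrite /z2; apply/andP; split; lra.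
have A0 : 0 <= A12 * z2^-1 ^+ g.
  by rewrite mulr_ge0 // ?exprn_ge0 // ?invr_ge0 /A12 /z2; lra.
rewrite size_Wlist natr_sum.
apply: le_trans (_ : \sum_(M <- iota 6 (g - 5)) (A12 * z2^-1 ^+ g / (1 - q)) * z2 ^+ M <= _).
  rewrite !big_seq; apply: ler_sum => M HM.
  rewrite natr_sum.
  apply: le_trans (_ : \sum_(n1 <- iota 0 (g - M).+1) A12 * z2^-1 ^+ g * (z2 ^+ M * q ^+ n1) <= _).
    rewrite !big_seq; apply: ler_sum => n1 Hn1; rewrite natrM; exact: term_bound.
  have -> : \sum_(n1 <- iota 0 (g - M).+1) A12 * z2^-1 ^+ g * (z2 ^+ M * q ^+ n1)
     = A12 * z2^-1 ^+ g * z2 ^+ M * \sum_(n1 <- iota 0 (g - M).+1) q ^+ n1.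
    by rewrite mulr_sumr; apply: eq_bigr => n1 _; rewrite mulrA.
  have hg := geo_le 0 (g - M).+1 q0.
  have hM : 0 <= A12 * z2^-1 ^+ g * z2 ^+ M by rewrite mulr_ge0 // exprn_ge0 //; case/andP: zz.
  apply: le_trans (ler_wpM2l hM hg) _.
  by rewrite le_eqVlt; apply/orP; left; apply/eqP; rewrite mul1r; ring.
rewrite -mulr_sumr.
have hg := geo_le 6 (g - 5) zz.
have hM : 0 <= A12 * z2^-1 ^+ g / (1 - q).
  by rewrite mulr_ge0 // invr_ge0; case/andP: q0 => _ ?; lra.
apply: le_trans (ler_wpM2l hM hg) _.
by rewrite le_eqVlt; apply/orP; left; apply/eqP; rewrite /Kc -/q mul1r; ring.
Qed.
End Final.
Section Growth.
Local Open Scope ring_scope.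
Import Order.TTheory GRing.Theory Num.Theory.
Variable R : realType.

Lemma bern (x : R) n : 0 <= x -> 1 + n%:R * x <= (1 + x) ^+ n.
Proof.
move=> x0; elim: n => [|n IH]; first by rewrite mul0r addr0 expr0.
rewrite exprS -natr1.
have h : 0 <= n%:R * x by rewrite mulr_ge0.
have : (1 + x) * (1 + n%:R * x) <= (1 + x) * (1 + x) ^+ n by rewrite ler_wpM2l //; lra.
have : 0 <= x * (n%:R * x) by rewrite mulr_ge0.
nra.
Qed.

Lemma growth_le (a : nat -> nat) (K c d : R) : 0 < K -> 1 <= c -> c < d ->
  (forall g, (a g)%:R <= K * c ^+ g) -> (growth_rate R a <= d%:E)%E.
Proof.
move=> K0 c1 cd Ha.
set N := Num.Def.archi_bound (K * c / (d - c)).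
have hN : K * c / (d - c) < N%:R by apply: archi_boundP; rewrite divr_ge0 // ?mulr_ge0; lra.
rewrite /growth_rate /limn_esup /limf_esup.
apply: (@le_trans _ _ (ereal_sup ((fun g : nat => (((a g)%:R : R) `^ (g%:R^-1))%:E) @` [set g : nat | (N.+1 <= g)%N]%classic))).
  apply: ereal_inf_lbound; exists [set g : nat | (N.+1 <= g)%N]%classic => //; exists N.+1 => //.
apply: ge_ereal_sup => _ [g /= Ng <-].
rewrite lee_fin.
have g0 : 0 < g%:R :> R by rewrite ltr0n; lia.
have gN : N%:R < g%:R :> R by rewrite ltr_nat.
set y := c * (1 + K / g%:R).
have y0 : 0 <= y by rewrite mulr_ge0 ?addr_ge0 ?divr_ge0; lra.
have hy : (a g)%:R <= y ^+ g.
  apply: le_trans (Ha g) _.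
  have c0 : 0 <= c ^+ g by rewrite exprn_ge0 //; lra.
  rewrite /y exprMn [K * _]mulrC; apply: ler_wpM2l => //.
  have Kg : 0 <= K / g%:R by rewrite divr_ge0; lra.
  apply: le_trans (bern g Kg).
  rewrite mulrC divfK ?gt_eqF //; lra.
apply: (@le_trans _ _ ((y ^+ g) `^ (g%:R^-1))).
  apply: ge0_ler_powR => //; rewrite nnegrE //; exact: exprn_ge0.
rewrite -(powR_mulrn g y0) -powRrM mulfV ?gt_eqF // powRr1 //.
rewrite /y.
have : K * c / (d - c) < g%:R by lra.
rewrite ltr_pdivrMr; last lra.
move=> h.
have : c * K / g%:R <= d - c by rewrite ler_pdivrMr //; lra.
have -> : c * (1 + K / g%:R) = c + c * K / g%:R by rewrite mulrDr mulr1 mulrA.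
lra.
Qed.
End Growth.
Section Main.
Local Open Scope ring_scope.
Import Order.TTheory GRing.Theory Num.Theory.

Lemma golden_gt (R : realType) : (55/34 : R) < golden R.
Proof.
rewrite /golden.
have h : (76/34 : R) < Num.sqrt 5.
  have e : (76/34 : R) = Num.sqrt ((76/34) ^+ 2) by rewrite sqrtr_sqr ger0_norm //; lra.
  rewrite e ltr_sqrt; last lra.
  rewrite expr2; lra.
lra.
Qed.

Lemma Kc_gt0 (R : realType) : 0 < Kc R.
Proof.
rewrite /Kc /A12 z1inv /z2.
apply: divr_gt0; first apply: divr_gt0.
- apply: mulr_gt0; apply: divr_gt0; lra.
- lra.
- lra.
Qed.

Lemma z2inv (R : realType) : (z2 R)^-1 = 21/13.
Proof. by rewrite /z2 invf_div. Qed.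
End Main.

Local Open Scope ring_scope.
Local Open Scope ereal_scope.

Theorem proposition10p1 (R : realType) :
  growth_rate R w_count < (golden R)%:E /\
  growth_rate R nsg_count < (golden R)%:E.
Proof.
have c1 : (1 <= (z2 R)^-1)%R by rewrite z2inv; lra.
have cd : ((z2 R)^-1 < 55/34)%R by rewrite z2inv; lra.
have hg : (55/34 : R)%:E < (golden R)%:E by rewrite lte_fin golden_gt.
split.
- apply: Order.POrderTheory.le_lt_trans hg.
  apply: growth_le (Kc_gt0 R) c1 cd _.
  exact: w_bound.
- apply: Order.POrderTheory.le_lt_trans hg.
  apply: growth_le (Kc_gt0 R) c1 cd _ => g.
  apply: Order.le_trans (w_bound R g).
  by have := nsg_le_w g; rewrite -(Num.Theory.ler_nat R).
Qed.
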